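(* For every positive integer $M$ there exists a temporal DAG whose underlying digraph is a transitive tournament, in which every temporal antichain has size at most $1$, but every temporal path cover and every temporally disjoint path cover has size at least $M$. In particular, temporal DAGs satisfy neither the Dilworth property nor the TD-Dilworth property, and the ratio between the minimum size of a temporal (disjoint) path cover and the maximum size of a temporal antichain is unbounded.
   Context: A temporal digraph is a pair $\mathcal D=(D,\lambda)$, where $D=(V,A)$ is a finite digraph (the underlying digraph) and $\lambda:A\to 2^{\{1,\dots,t_{\max}\}}$ assigns to each arc the set of time-steps (labels) at which it is active. A temporal DAG is a temporal digraph whose underlying digraph is acyclic. A temporal path is a sequence $(v_1,v_2,t_1),\dots,(v_{k-1},v_k,t_{k-1})$ with $v_1,\dots,v_k$ pairwise distinct, $\overrightarrow{v_iv_{i+1}}\in A$, $t_i\in\lambda(\overrightarrow{v_iv_{i+1}})$, and $t_1<\dots<t_{k-1}$; a single vertex is also a temporal path. It goes from $v_1$ to $v_k$. A path occupies $v_i$ ($1<i<k$) at every time in $\{t_{i-1},\dots,t_i\}$, $v_1$ at time $t_1$ and $v_k$ at time $t_{k-1}$; two temporal paths are temporally disjoint if they never occupy the same vertex at the same time. A temporal path cover is a collection of temporal paths whose vertex sets cover $V$; a temporally disjoint path cover is one whose paths are pairwise temporally disjoint. Two vertices are temporally connected if there is a temporal path from one to the other. A temporal antichain is a set of pairwise not temporally connected vertices. A class of temporal digraphs has the Dilworth property (resp. TD-Dilworth property) if for each member the minimum size of a temporal path cover (resp. temporally disjoint path cover) equals the maximum size of a temporal antichain. *)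

(* Defs.v *)
From mathcomp Require Import all_boot.
Set Implicit Arguments. Unset Strict Implicit. Unset Printing Implicit Defensive.

(* A temporal digraph on a finite vertex type V: tarc relation, maximal time
   tmax, and labels tlam u v (time-steps at which tarc u->v is active). *)
Record tdigraph (V : finType) := TDigraph {
  tarc  : rel V;
  tmax : nat;
  tlam  : V -> V -> seq nat }.

Definition tdigraph_wf (V : finType) (D : tdigraph V) : Prop :=
  forall u v t, t \in tlam D u v -> [/\ tarc D u v, 1 <= t & t <= tmax D].

Definition acyclic (V : finType) (e : rel V) : Prop :=
  forall x y, e x y -> ~~ connect e y x.

Definition transitive_tournament (V : finType) (e : rel V) : Prop :=
  [/\ forall x, ~~ e x x,
      forall x y, x != y -> (e x y (+) e y x) = true
    & forall x y z, e x y -> e y z -> e x z].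

(* A temporal path: vertices v_0..v_{k-1} (k >= 1) and times t_0..t_{k-2};
   step i is (v_i, v_{i+1}, t_i). *)
Record tpath (V : finType) := TPath { tverts : seq V; ttimes : seq nat }.

Definition is_tpath (V : finType) (D : tdigraph V) (P : tpath V) : Prop :=
  [/\ size (tverts P) = (size (ttimes P)).+1,
      uniq (tverts P),
      forall (i : nat) (x : V), i < size (ttimes P) ->
        let u := nth x (tverts P) i in
        let w := nth x (tverts P) i.+1 in
        tarc D u w /\ nth 0 (ttimes P) i \in tlam D u w
    & sorted ltn (ttimes P)].

Definition tp_first (V : finType) (P : tpath V) (x : V) := head x (tverts P).
Definition tp_last  (V : finType) (P : tpath V) (x : V) := last x (tverts P).

(* P occupies v at time t (0-indexed version of the paper's definition).
   A single-vertex path has no time steps and occupies nothing. *)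
Definition occupies (V : finType) (P : tpath V) (v : V) (t : nat) : Prop :=
  let vs := tverts P in let ts := ttimes P in let k := size vs in
  2 <= k /\
  ((v = nth v vs 0 /\ t = nth 0 ts 0) \/
   (v = nth v vs k.-1 /\ t = nth 0 ts k.-2) \/
   (exists i, [/\ 0 < i, i < k.-1, v = nth v vs i,
                  nth 0 ts i.-1 <= t & t <= nth 0 ts i])).

Definition temporally_disjoint (V : finType) (P Q : tpath V) : Prop :=
  ~ exists v t, occupies P v t /\ occupies Q v t.

Definition tpath_from_to (V : finType) (D : tdigraph V) (u v : V) : Prop :=
  exists P : tpath V, [/\ is_tpath D P, tp_first P u = u & tp_last P u = v].

Definition tconnected (V : finType) (D : tdigraph V) (u v : V) : Prop :=
  tpath_from_to D u v \/ tpath_from_to D v u.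

Definition temporal_antichain (V : finType) (D : tdigraph V) (S : {set V}) :=
  forall u v, u \in S -> v \in S -> u != v -> ~ tconnected D u v.

(* list membership (no decidable equality on paths needed) *)
Fixpoint inseq (T : Type) (x : T) (s : seq T) : Prop :=
  if s is y :: s' then y = x \/ inseq x s' else False.

Definition temporal_path_cover (V : finType) (D : tdigraph V)
  (C : seq (tpath V)) : Prop :=
  (forall P, inseq P C -> is_tpath D P) /\
  (forall v : V, exists2 P, inseq P C & v \in tverts P).

Definition td_path_cover (V : finType) (D : tdigraph V)
  (C : seq (tpath V)) : Prop :=
  temporal_path_cover D C /\
  (forall i j, i < size C -> j < size C -> i != j ->
     forall P0, temporally_disjoint (nth P0 C i) (nth P0 C j)).

(* Main.v *)
Require Import Defs.
From mathcomp Require Import all_boot.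
From mathcomp Require Import zify.

Definition Dex (n : nat) : tdigraph 'I_n :=
  @TDigraph 'I_n (fun x y : 'I_n => x < y) 1
    (fun u v : 'I_n => if u < v then [:: 1] else [::]).

Lemma path_ltn_last n (y : 'I_n) p : path (fun x y : 'I_n => x < y) y p -> y <= last y p.
Proof.
elim: p y => [|z p IH] y //= /andP [Hyz Hp].
have := IH z Hp. move=> H. apply: leq_trans (ltnW Hyz) H.
Qed.

Lemma inseq_flat n (C : seq (tpath 'I_n)) v :
  (exists2 P, inseq P C & v \in tverts P) -> v \in flatten (map (@tverts _) C).
Proof.
elim: C => [|Q C IH] [P] //= [<-|HP] Hv; rewrite mem_cat.
  by rewrite Hv.
by rewrite IH ?orbT //; exists P.
Qed.

Lemma size_flat n (C : seq (tpath 'I_n)) :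
  (forall P, inseq P C -> size (tverts P) <= 2) ->
  size (flatten (map (@tverts _) C)) <= 2 * size C.
Proof.
elim: C => [|Q C IH] H //=.
rewrite size_cat.
have h1 := H Q (or_introl erefl).
have h2 := IH (fun P HP => H P (or_intror HP)).
rewrite mulnS; exact: leq_add.
Qed.

Lemma tpath_small n (P : tpath 'I_n) : is_tpath (Dex n) P -> size (tverts P) <= 2.
Proof.
case: P => vs ts; case=> /= Hs _ Hst Hsort.
rewrite Hs ltnS.
case: ts Hsort Hs Hst => [|a [|b s]] //= Hsort Hs Hst.
case: vs Hs Hst => [|x0 vs] // Hs Hst.
have [_ Ha] := Hst 0 x0 erefl.
have [_ Hb] := Hst 1 x0 erefl.
move: Ha Hb; rewrite /Dex /=.
case: ifP => _; rewrite ?inE // => /eqP Ea.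
case: ifP => _; rewrite ?inE // => /eqP Eb.
by move: Hsort; rewrite Ea Eb.
Qed.

Theorem mainTheorem2 :
  forall M : nat, 0 < M ->
  exists (n : nat) (D : tdigraph 'I_n),
    [/\ tdigraph_wf D,
        acyclic (tarc D),
        transitive_tournament (tarc D),
        (forall S : {set 'I_n}, temporal_antichain D S -> #|S| <= 1)
      & (forall C, temporal_path_cover D C -> M <= size C) /\
        (forall C, td_path_cover D C -> M <= size C)].
Proof.
move=> M _.
have cov : forall C, temporal_path_cover (Dex (2 * M)) C -> M <= size C.
  move=> C [HP Hc].
  have H1 : #|'I_(2 * M)| <= size (flatten (map (@tverts _) C)).
    apply: leq_trans (card_size _).
    apply: subset_leq_card; apply/subsetP => v _.
    exact: (@inseq_flat _ C v).
  have H2 := @size_flat _ C (fun P (HP0 : inseq P C) => @tpath_small _ P (HP P HP0)).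
  rewrite card_ord in H1. lia.
exists (2 * M), (Dex (2 * M)); split.
- move=> u v t; rewrite /Dex /=; case: ifP => H; rewrite ?inE // => /eqP ->.
  by split.
- move=> x y /= Hxy; apply/negP => /connectP [p Hp Hl].
  have := @path_ltn_last _ y p Hp; rewrite -Hl. lia.
- split => /=.
  + by move=> x; rewrite /= ltnn.
  + move=> x y Hxy; case: ltngtP => //= H.
    by move: Hxy; rewrite (val_inj H) eqxx.
  + move=> x y z; exact: ltn_trans.
- move=> S HS; rewrite leqNgt; apply/negP => /card_gt1P [u [v [Hu Hv Huv]]].
  apply: (HS u v Hu Hv Huv).
  have key : forall a b : 'I_(2 * M), a < b -> tpath_from_to (Dex (2 * M)) a b.
    move=> a b Hab; exists (TPath [:: a; b] [:: 1]); split => //.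
    split => //=.
    + by rewrite inE andbT; apply/eqP => E; move: Hab; rewrite E ltnn.
    + move=> [|i] x //= _; by rewrite Hab inE.
  case: (ltngtP u v) => H.
  + by left; apply: key.
  + by right; apply: key.
  + by move: Huv; rewrite (val_inj H) eqxx.
- split => // C [HC _]; exact: cov.
Qed.
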